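(* (1) Let $a_n=\sum_{k=0}^n\binom{n}{k}^2\binom{n+k}{k}$. Then for every prime $p$ and every integer $n$ with $0\le n\le p-1$, $$a_n\equiv(-1)^na_{p-1-n}\pmod{p}.$$ (2) Let $b_n=\sum_{k=0}^n\binom{n}{k}^2\binom{2k}{k}$. Then for every prime $p>3$ and every integer $n$ with $0\le n\le p-1$, $$b_n\equiv\left(\frac{-3}{p}\right)9^nb_{p-1-n}\pmod{p},$$ where $\left(\frac{-3}{p}\right)$ is the Legendre symbol. *)

(* Defs.v *)
From mathcomp Require Import all_boot all_order all_algebra.
Set Implicit Arguments. Unset Strict Implicit. Unset Printing Implicit Defensive.
Import Order.TTheory GRing.Theory Num.Theory.
Local Open Scope ring_scope.

Definition apery_a (n : nat) : nat :=
  (\sum_(0 <= k < n.+1) 'C(n, k) ^ 2 * 'C(n + k, k))%N.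

Definition seq_b (n : nat) : nat :=
  (\sum_(0 <= k < n.+1) 'C(n, k) ^ 2 * 'C(2 * k, k))%N.

Definition legendre (a : int) (p : nat) : int :=
  if (p%:Z %| a)%Z then 0
  else if [exists x : 'I_p, ((x%:Z) ^+ 2 == a %[mod p%:Z])%Z] then 1 else -1.

(* Main.v *)
Require Import Defs.
From mathcomp Require Import all_boot all_order all_algebra all_field.
From mathcomp Require Import zify ring.
Import Order.TTheory GRing.Theory Num.Theory.
Local Open Scope ring_scope.
Set Implicit Arguments. Unset Strict Implicit.

Lemma ffact_refl {F : fieldType} (p n : nat) : p \in [pchar F] -> (n < p)%N ->
  forall k, ((p - 1 - n) ^_ k)%:R = (-1) ^+ k * ((n + k) ^_ k)%:R :> F.
Proof.
move=> pF np; elim=> [|k IH]; first by rewrite !ffactn0 expr0 mul1r.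
rewrite ffactnSr addnS ffactSS natrM exprS natrM.
have [le|lt] := leqP k (p - 1 - n).
  have -> : ((p - 1 - n - k)%:R = - (n + k).+1%:R :> F).
    apply/eqP; rewrite -subr_eq0 opprK -natrD.
    have -> : (p - 1 - n - k + (n + k).+1 = p)%N by lia.
    by rewrite (pcharf0 pF).
  rewrite IH; ring.
have E : ((p - 1 - n) ^_ k = 0)%N by rewrite ffact_small.
move: IH; rewrite E => /esym /eqP; rewrite mulf_eq0 signr_eq0 /= => /eqP ->.
by rewrite !mul0r !mulr0.
Qed.

Lemma natr_nz {F : fieldType} (p k : nat) : p \in [pchar F] -> (0 < k < p)%N ->
  k%:R != 0 :> F.
Proof.
move=> pF /andP[k0 kp]; rewrite -(dvdn_pcharf pF).
by apply/negP => /dvdn_leq => /(_ k0); rewrite leqNgt kp.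
Qed.

Lemma fact_nz {F : fieldType} (p k : nat) : p \in [pchar F] -> (k < p)%N ->
  k`!%:R != 0 :> F.
Proof.
move=> pF; elim: k => [|k IH] kp; first by rewrite fact0 oner_neq0.
rewrite factS natrM mulf_neq0 //; last by apply: IH; lia.

by apply: (natr_nz pF); lia.
Qed.

Lemma binom_refl {F : fieldType} (p n k : nat) : p \in [pchar F] -> (n < p)%N ->
  (k < p)%N -> 'C(p - 1 - n, k)%:R = (-1) ^+ k * 'C(n + k, k)%:R :> F.
Proof.
move=> pF np kp.
have kf := @fact_nz F p k pF kp.
apply: (mulIf kf).
by rewrite -!natrM !bin_ffact -mulrA -natrM bin_ffact (ffact_refl pF np).
Qed.

Lemma binom_refl2 {F : fieldType} (p n k : nat) : p \in [pchar F] -> (n < p)%N ->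
  (k < p)%N -> 'C(n + k, k)%:R = (-1) ^+ k * 'C(p - 1 - n, k)%:R :> F.
Proof.
move=> pF np kp; by rewrite (binom_refl pF np kp) mulrA -expr2 sqrr_sign mul1r.


Qed.

Lemma natr_sum0 {F : fieldType} (p a b : nat) : p \in [pchar F] -> (a + b = p)%N ->
  a%:R = - b%:R :> F.
Proof.
move=> pF E; apply/eqP; rewrite -subr_eq0 opprK -natrD E.
by rewrite (pcharf0 pF).
Qed.

Lemma reflect_rec {F : fieldType} (p : nat) (u : nat -> F) (A Q : F) :
  p \in [pchar F] ->
  (forall n, (n.+1%:R) ^+ 2 * u n.+1 =
      (A * n%:R * n.+1%:R + 3) * u n + Q * n%:R ^+ 2 * u n.-1) ->
  u 0%N = 1 ->
  forall n, (n <= p - 1)%N -> (- Q) ^+ n * u (p - 1 - n)%N = u (p - 1)%N * u n.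
Proof.
move=> pF rec u0.
have pp := pcharf_prime pF.
have p1 : (1 < p)%N by apply: prime_gt1.
pose z n := (- Q) ^+ n * u (p - 1 - n)%N.
have R : forall n, (n.+1 <= p - 1)%N ->
    (n.+1%:R) ^+ 2 * z n.+1 = (A * n%:R * n.+1%:R + 3) * z n + Q * n%:R ^+ 2 * z n.-1.
  move=> n nle.
  have H := rec (p - 1 - n)%N.
  rewrite (@natr_sum0 F p (p - 1 - n).+1 n pF) in H; last by lia.
  rewrite (@natr_sum0 F p (p - 1 - n) n.+1 pF) in H; last by lia.
  have E2 : (p - 1 - n).-1 = (p - 1 - n.+1)%N by lia.
  rewrite E2 in H.
  rewrite /z.
  case: n nle H E2 => [|m] nle H E2.
    apply/eqP; rewrite -subr_eq0; apply/eqP.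
    rewrite subn0 in H *.
    transitivity (- (Q * u (p - 1 - 1)%N + 3 * u (p - 1)%N)); first by ring.
    move: H; rewrite oppr0 expr0n /= => H.
    rewrite mul0r mulr0 add0r sqrrN expr1n mulr1 in H.
    by rewrite addrC -H oppr0.
  have E1 : ((p - 1 - m.+1).+1 = p - 1 - m)%N by lia.
  rewrite E1 in H.
  have E3 : (p - 1 - m.+1.-1 = p - 1 - m)%N by lia.
  rewrite E3.
  apply/eqP; rewrite -subr_eq0; apply/eqP.
  set Hl := _ * u (p - 1 - m)%N in H.
  transitivity (- (- Q) ^+ m * Q * (Hl - ((A * (- m.+2%:R) * - m.+1%:R + 3) * u (p - 1 - m.+1)%N +
       Q * (- m.+2%:R) ^+ 2 * u (p - 1 - m.+2)%N))); last by rewrite H subrr mulr0.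
  rewrite /Hl; have -> : m.+1.-1 = m by [].
  rewrite !exprS; ring.
have Z : forall n, (n.+1 <= p - 1)%N -> z n = z 0%N * u n /\ z n.+1 = z 0%N * u n.+1.
  elim=> [|n IH] nle.
    have R0 := R 0%N nle.
    have r0 := rec 0%N.
    rewrite u0 in r0.
    split; first by rewrite u0 mulr1.
    move: R0 r0; rewrite /= => R0 r0.
    have e1 : z 1%N = 3 * z 0%N.
      by transitivity (1 ^+ 2 * z 1%N); [ring | rewrite R0; ring].
    have e2 : u 1%N = 3.
      by transitivity (1 ^+ 2 * u 1%N); [ring | rewrite r0; ring].
    by rewrite e1 e2 mulrC.
  have [IH1 IH2] := IH (ltnW nle).
  split; first exact IH2.
  have R1 := R n.+1 nle.
  rewrite /= IH1 IH2 in R1.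
  have r1 := rec n.+1.
  rewrite /= in r1.
  have nz : (n.+2%:R ^+ 2 : F) != 0.
    by rewrite expf_neq0 // (natr_nz pF); lia.
  apply: (mulfI nz).
  rewrite R1 [RHS]mulrCA r1; ring.
move=> n nle; case: n nle => [|n] nle.
  by rewrite expr0 mul1r subn0 u0 mulr1.
have [_ H] := Z n nle.
by rewrite /z in H; rewrite H expr0 mul1r subn0.
Qed.

Lemma nz_add (k n : nat) : (0 < k)%N -> (k%:R + n%:R != 0 :> rat).
Proof. by move=> k0; rewrite -natrD pnatr_eq0 -lt0n addn_gt0 k0. Qed.
Lemma nz_add1 (n : nat) : (1 + n%:R != 0 :> rat).
Proof. exact: (@nz_add 1 n). Qed.
Ltac nzt := rewrite ?nz_add1 ?nz_add //.

Definition Cr (n k : nat) : rat := ('C(n, k))%:R.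

Lemma Cr_diag n j : j.+1%:R * Cr n.+1 j.+1 = n.+1%:R * Cr n j.
Proof. by rewrite /Cr -!natrM -mul_bin_diag. Qed.

Lemma Cr_left n j : j.+1%:R * Cr n j.+1 = (n%:R - j%:R) * Cr n j.
Proof.
rewrite /Cr -natrM mul_bin_left natrM.
have [le|lt] := leqP j n; first by rewrite natrB.
by rewrite bin_small // !mulr0.
Qed.

Lemma Cr_down n j : n.+1%:R * Cr n j.+1 = (n%:R - j%:R) * Cr n.+1 j.+1.
Proof.
have H := mul_bin_down n.+1 j.+1; rewrite /= in H.
rewrite /Cr -natrM H natrM.
have [le|lt] := leqP j n; first by rewrite subSS natrB.
by rewrite (@bin_small n.+1 j.+1) // !mulr0.
Qed.

Lemma Cr_cent j : j.+2%:R * Cr (2 * j.+2) j.+2 = 2 * (2 * j.+1%:R + 1) * Cr (2 * j.+1) j.+1.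
Proof.
have E1 := Cr_diag (2 * j.+2).-1 j.+1.
have E2 := Cr_down (2 * j.+1) j.
have -> : (2 * j.+2 = ((2 * j.+2).-1).+1)%N by lia.
rewrite E1.
have -> : ((2 * j.+2).-1 = (2 * j.+1).+1)%N by lia.
apply: (@mulfI _ j.+2%:R); first by rewrite pnatr_eq0.
rewrite mulrCA.
have -> : j.+2%:R * Cr (2 * j.+1).+1 j.+1 = (2 * j.+1).+1%:R * Cr (2 * j.+1) j.+1.
  rewrite E2.
  have -> : (2 * j.+1)%:R - j%:R = j.+2%:R :> rat by rewrite -natrB; [congr (_%:R); lia | lia].
  by [].
ring.
Qed.

Definition Fb (n k : nat) : rat := Cr n k ^+ 2 * Cr (2 * k) k.
Definition Lb (m k : nat) : rat :=
  m.+2%:R ^+ 2 * Fb m.+2 k - (10 * m.+1%:R * m.+2%:R + 3) * Fb m.+1 k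
  + 9 * m.+1%:R ^+ 2 * Fb m k.
Definition Gb (m j : nat) : rat :=
  j.+1%:R * (3 * j%:R - 4 * m.+1%:R - 1) * Cr m.+1 j ^+ 2 * Cr (2 * j.+1) j.+1.

Lemma Lb0 m : Lb m 0 = Gb m 0.
Proof.
rewrite /Lb /Gb /Fb /Cr !bin0 /=.
have -> : 'C(2 * 1, 1) = 2%N by [].
ring.
Qed.

Lemma LbS m j : Lb m j.+1 = Gb m j.+1 - Gb m j.
Proof.
rewrite /Lb /Gb /Fb.
have E1 := Cr_diag m.+1 j.
have E2 := Cr_left m.+1 j.
have E3 := Cr_down m j.
have E4 := Cr_cent j.
set c := Cr m.+1 j in E1 E2 *.
set d := Cr (2 * j.+1) j.+1 in E4 *.
set w := Cr m.+2 j.+1 in E1 *.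
set x := Cr m.+1 j.+1 in E2 E3 *.
set y := Cr m j.+1 in E3 *.
set e := Cr (2 * j.+2) j.+2 in E4 *.
have nz1 : j.+1%:R != 0 :> rat by rewrite pnatr_eq0.
have nz2 : j.+2%:R != 0 :> rat by rewrite pnatr_eq0.
have nz3 : m.+1%:R != 0 :> rat by rewrite pnatr_eq0.
have -> : w = m.+2%:R * c / j.+1%:R.
  apply: (mulfI nz1); rewrite E1; field; nzt.
have -> : x = (m.+1%:R - j%:R) * c / j.+1%:R by apply: (mulfI nz1); rewrite E2; field; nzt.
have -> : y = (m%:R - j%:R) * ((m.+1%:R - j%:R) * c / j.+1%:R) / m.+1%:R.
  apply: (mulfI nz3); rewrite E3.
  have -> : x = (m.+1%:R - j%:R) * c / j.+1%:R by apply: (mulfI nz1); rewrite E2; field; nzt.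
  field; nzt.
have -> : e = 2 * (2 * j.+1%:R + 1) * d / j.+2%:R by apply: (mulfI nz2); rewrite E4; field; nzt.
field; nzt.
Qed.

Lemma sum_ext (R : zmodType) (f : nat -> R) n N : (n < N)%N ->
  (forall k, (n < k)%N -> f k = 0) ->
  \sum_(0 <= k < n.+1) f k = \sum_(0 <= k < N) f k.
Proof.
move=> nN f0; elim: N nN => [//|N IH] nN.
have [lt|ge] := ltnP n N.
  by rewrite [RHS]big_nat_recr //= f0 // addr0 IH.
by have -> : N = n by lia.
Qed.

Lemma tele (R : zmodType) (L G : nat -> R) : L 0%N = G 0%N ->
  (forall j, L j.+1 = G j.+1 - G j) ->
  forall N, \sum_(0 <= k < N.+1) L k = G N.
Proof.
move=> L0 LS; elim=> [|N IH]; first by rewrite big_nat1.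
by rewrite big_nat_recr //= IH LS addrC subrK.
Qed.

Lemma b_sum n : (seq_b n)%:R = \sum_(0 <= k < n.+1) Fb n k.
Proof.
rewrite /seq_b natr_sum; apply: eq_bigr => k _.
by rewrite /Fb /Cr natrM natrX.
Qed.

Lemma Fb_small n k : (n < k)%N -> Fb n k = 0.
Proof. by move=> nk; rewrite /Fb /Cr bin_small // expr0n mul0r. Qed.

Lemma rec_b_rat m :
  m.+2%:R ^+ 2 * (seq_b m.+2)%:R - (10 * m.+1%:R * m.+2%:R + 3) * (seq_b m.+1)%:R
  + 9 * m.+1%:R ^+ 2 * (seq_b m)%:R = 0 :> rat.
Proof.
rewrite !b_sum (@sum_ext _ (Fb m.+1) m.+1 m.+3) ?(@sum_ext _ (Fb m) m m.+3) //;
  try by move=> k; apply: Fb_small.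
have := tele (Lb0 m) (@LbS m) m.+2.
rewrite /Lb !big_split /= sumrN -!mulr_sumr => ->.
rewrite /Gb /Cr bin_small // expr0n mulr0 mul0r.
all: try by []; lia.
Qed.

Lemma rec_b m : ((m.+2) ^ 2 * seq_b m.+2 + 9 * (m.+1) ^ 2 * seq_b m
   = (10 * m.+1 * m.+2 + 3) * seq_b m.+1)%N.
Proof.
apply/eqP; rewrite -(eqr_nat rat).
rewrite natrD (natrM _ (m.+2 ^ 2)) (natrM _ (9 * m.+1 ^ 2)) (natrM _ 9) !natrX.
rewrite (natrM _ (10 * m.+1 * m.+2 + 3)) (natrD _ (10 * m.+1 * m.+2)) !natrM.
rewrite -subr_eq0; apply/eqP.
rewrite -[RHS](rec_b_rat m); ring.
Qed.

Definition Fa (n k : nat) : rat := Cr n k ^+ 2 * Cr (n + k) k.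
Definition La (m k : nat) : rat :=
  m.+2%:R ^+ 2 * Fa m.+2 k - (11 * m.+1%:R * m.+2%:R + 3) * Fa m.+1 k
  - m.+1%:R ^+ 2 * Fa m k.
Definition qa (n k : rat) : rat := k ^+ 2 + (6 * n + 1) * k - (n + 1) * (11 * n + 4).
Definition Ga (m j : nat) : rat :=
  qa m.+1%:R j.+1%:R * Cr m.+1 j ^+ 2 * Cr (m.+1 + j) j.

Lemma La0 m : La m 0 = Ga m 0.
Proof.
rewrite /La /Ga /Fa /qa /Cr !bin0 /=. ring.
Qed.

Lemma LaS m j : La m j.+1 = Ga m j.+1 - Ga m j.
Proof.
rewrite /La /Ga /Fa.
have E1 := Cr_diag m.+1 j.
have E2 := Cr_left m.+1 j.
have E3 := Cr_down m j.
have F1 := Cr_left (m + j).+1 j.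
have F2 := Cr_diag (m + j).+1 j.
have F3 := Cr_down (m + j).+2 j.
have -> : (m.+2 + j.+1 = (m + j).+3)%N by lia.
have -> : (m.+1 + j.+1 = (m + j).+2)%N by lia.
have -> : (m + j.+1 = (m + j).+1)%N by lia.
have -> : (m.+1 + j = (m + j).+1)%N by lia.
set c := Cr m.+1 j in E1 E2 *.
set w := Cr m.+2 j.+1 in E1 *.
set x := Cr m.+1 j.+1 in E2 E3 *.
set y := Cr m j.+1 in E3 *.
set e := Cr (m + j).+1 j in F1 F2 *.
set f1 := Cr (m + j).+1 j.+1 in F1 *.
set f2 := Cr (m + j).+2 j.+1 in F2 F3 *.
set f3 := Cr (m + j).+3 j.+1 in F3 *.
have nz1 : j.+1%:R != 0 :> rat by rewrite pnatr_eq0.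
have nz3 : m.+1%:R != 0 :> rat by rewrite pnatr_eq0.
have nz4 : m.+2%:R != 0 :> rat by rewrite pnatr_eq0.
have -> : w = m.+2%:R * c / j.+1%:R.
  by apply: (mulfI nz1); rewrite E1; field; nzt.
have Ex : x = (m.+1%:R - j%:R) * c / j.+1%:R.
  by apply: (mulfI nz1); rewrite E2; field; nzt.
have -> : y = (m%:R - j%:R) * ((m.+1%:R - j%:R) * c / j.+1%:R) / m.+1%:R.
  by apply: (mulfI nz3); rewrite E3 Ex; field; nzt.
rewrite Ex.
have -> : f1 = ((m + j).+1%:R - j%:R) * e / j.+1%:R.
  by apply: (mulfI nz1); rewrite F1; field; nzt.
have Ef2 : f2 = (m + j).+2%:R * e / j.+1%:R.
  by apply: (mulfI nz1); rewrite F2; field; nzt.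
have -> : f3 = (m + j).+3%:R * f2 / m.+2%:R.
  apply: (mulfI nz4).
  have -> : m.+2%:R = ((m + j).+2%:R - j%:R) :> rat.
    by rewrite -natrB; [congr (_%:R); lia | lia].
  rewrite F3; field.
  by rewrite addrA addrK nz_add.
rewrite Ef2 /qa.
field; nzt.
Qed.

Lemma a_sum n : (apery_a n)%:R = \sum_(0 <= k < n.+1) Fa n k.
Proof.
rewrite /apery_a natr_sum; apply: eq_bigr => k _.
by rewrite /Fa /Cr natrM natrX.
Qed.

Lemma Fa_small n k : (n < k)%N -> Fa n k = 0.
Proof. by move=> nk; rewrite /Fa /Cr bin_small // expr0n mul0r. Qed.

Lemma rec_a_rat m :
  m.+2%:R ^+ 2 * (apery_a m.+2)%:R - (11 * m.+1%:R * m.+2%:R + 3) * (apery_a m.+1)%:R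
  - m.+1%:R ^+ 2 * (apery_a m)%:R = 0 :> rat.
Proof.
rewrite !a_sum (@sum_ext _ (Fa m.+1) m.+1 m.+3) ?(@sum_ext _ (Fa m) m m.+3) //;
  try by move=> k; apply: Fa_small.
have := tele (La0 m) (@LaS m) m.+2.
rewrite /La !big_split /= !sumrN -!mulr_sumr => ->.
rewrite /Ga /Cr bin_small // expr0n mulr0 mul0r.
all: try by []; lia.
Qed.

Lemma rec_a m : ((m.+2) ^ 2 * apery_a m.+2
   = (11 * m.+1 * m.+2 + 3) * apery_a m.+1 + (m.+1) ^ 2 * apery_a m)%N.
Proof.
apply/eqP; rewrite -(eqr_nat rat).
rewrite natrD (natrM _ (m.+2 ^ 2)) (natrM _ (m.+1 ^ 2)) !natrX.
rewrite (natrM _ (11 * m.+1 * m.+2 + 3)) (natrD _ (11 * m.+1 * m.+2)) !natrM.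
rewrite -subr_eq0; apply/eqP.
rewrite -[RHS](rec_a_rat m); ring.
Qed.

Lemma a01 : (apery_a 0 = 1 /\ apery_a 1 = 3)%N.
Proof. by rewrite /apery_a unlock. Qed.
Lemma b01 : (seq_b 0 = 1 /\ seq_b 1 = 3)%N.
Proof. by rewrite /seq_b unlock. Qed.

Lemma a_rec_F {F : fieldType} n : (n.+1%:R) ^+ 2 * (apery_a n.+1)%:R =
  (11 * n%:R * n.+1%:R + 3) * (apery_a n)%:R + 1 * n%:R ^+ 2 * (apery_a n.-1)%:R :> F.
Proof.
case: n => [|m].
  have [-> ->] := a01; rewrite /=; ring.
have H := congr1 (fun x : nat => x%:R : F) (rec_a m).
move: H; rewrite /= (natrM _ (m.+2 ^ 2)) natrD (natrM _ (m.+1 ^ 2)) !natrX.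
rewrite (natrM _ (11 * m.+1 * m.+2 + 3)) (natrD _ (11 * m.+1 * m.+2)) !natrM => ->.
ring.
Qed.

Lemma b_rec_F {F : fieldType} n : (n.+1%:R) ^+ 2 * (seq_b n.+1)%:R =
  (10 * n%:R * n.+1%:R + 3) * (seq_b n)%:R + (-9) * n%:R ^+ 2 * (seq_b n.-1)%:R :> F.
Proof.
case: n => [|m].
  have [-> ->] := b01; rewrite /=; ring.
have H := congr1 (fun x : nat => x%:R : F) (rec_b m).
move: H; rewrite /= natrD (natrM _ (m.+2 ^ 2)) (natrM _ (9 * m.+1 ^ 2)) (natrM _ 9) !natrX.
rewrite (natrM _ (10 * m.+1 * m.+2 + 3)) (natrD _ (10 * m.+1 * m.+2)) !natrM => H.
apply/eqP; rewrite -subr_eq0 -H; apply/eqP; ring.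
Qed.

Lemma a_top {F : fieldType} p : p \in [pchar F] -> (apery_a (p - 1))%:R = 1 :> F.
Proof.
move=> pF; have pp := pcharf_prime pF; have p1 := prime_gt1 pp.
rewrite /apery_a natr_sum.
have -> : (p - 1).+1 = p by lia.
rewrite big_ltn; last by lia.
rewrite bin0 addn0 bin0 big1_seq ?addr0 //.
move=> k; rewrite mem_index_iota => kk.
have kp : (k < p)%N by lia.
have k1 : (0 < k)%N by lia.
rewrite natrM natrX.
have e1 := @binom_refl F p 0 k pF (prime_gt0 pp) kp.
have e2 := @binom_refl2 F p (p - 1) k pF ltac:(lia) kp.
rewrite subn0 add0n binn in e1.
rewrite e1 e2 (_ : (p - 1 - (p - 1) = 0)%N); last by lia.
by rewrite bin0n (_ : (k == 0%N) = false) ?mulr0 //; apply/negbTE; rewrite -lt0n.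
Qed.

Lemma modp_F p (u v : int) : prime p ->
  (u == v %[mod p%:Z])%Z = (u%:~R == v%:~R :> 'F_p).
Proof.
move=> pp; rewrite eqz_mod_dvd (dvdz_pcharf (pchar_Fp pp)) rmorphB /= subr_eq0.
by [].
Qed.

Lemma part1 (p n : nat) : prime p -> (n <= p - 1)%N ->
  ((apery_a n)%:Z == (-1) ^+ n * (apery_a (p - 1 - n))%:Z %[mod p%:Z])%Z.
Proof.
move=> pp np; rewrite modp_F // rmorphM /= intr_sign -!pmulrn.
have pF := pchar_Fp pp.
have := @reflect_rec _ p (fun n => (apery_a n)%:R) 11 1 pF (@a_rec_F _) _ n np.
rewrite (a_top pF) mul1r => ->; first by [].
by have [-> _] := a01.
Qed.

Lemma cent_aux {F : fieldType} p h : p \in [pchar F] -> (h.*2.+1 = p)%N ->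
  forall k, 4 ^+ k * (h ^_ k)%:R * k`!%:R = (-1) ^+ k * (2 * k)`!%:R :> F.
Proof.
move=> pF hp; elim=> [|k IH]; first by rewrite !expr0 ffactn0 fact0 !mul1r.
rewrite ffactnSr factS (_ : 2 * k.+1 = (2 * k).+2)%N; last by lia.
rewrite !factS !natrM !exprS.
have [le|lt] := leqP k h.
  have E : ((h - k).*2)%:R = - (2 * k).+1%:R :> F.
    by apply: (natr_sum0 pF); lia.
  rewrite -mul2n natrM in E.
  have E' : (h - k)%:R = - (2 * k).+1%:R / 2 :> F.
    have two : (2 : F) != 0.
      have := @natr_nz F p 2 pF; apply; have := prime_gt1 (pcharf_prime pF); lia.
    by rewrite -E mulrC mulKf.
  rewrite E'.
  transitivity (- (2 * k).+1%:R * k.+1%:R * 2 * (4 ^+ k * (h ^_ k)%:R * k`!%:R) : F).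
    by field; have := @natr_nz F p 2 pF; apply; have := prime_gt1 (pcharf_prime pF); lia.
  rewrite IH; ring.
have E : (h ^_ k = 0)%N by rewrite ffact_small.
move: IH; rewrite E mulr0 mul0r => /esym/eqP; rewrite mulf_eq0 signr_eq0 /= => /eqP ->.
by rewrite !mul0r !mulr0 !mul0r.
Qed.

Lemma cent_binom {F : fieldType} p h k : p \in [pchar F] -> (h.*2.+1 = p)%N ->
  (k < p)%N -> ('C(2 * k, k))%:R = (-4) ^+ k * ('C(h, k))%:R :> F.
Proof.
move=> pF hp kp.
have kf := fact_nz pF kp.
apply: (mulIf kf); apply: (mulIf kf).
have BF : ('C(2 * k, k) * (k`! * k`!) = (2 * k)`!)%N.
  have := @bin_fact (2 * k) k; rewrite (_ : 2 * k - k = k)%N; last by lia.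
  by apply; lia.
rewrite -mulrA -!natrM BF.
transitivity ((-1) ^+ k * (4 ^+ k * (h ^_ k)%:R * k`!%:R) : F).
  by rewrite (cent_aux pF hp) mulrA -expr2 sqrr_sign mul1r.
rewrite -(bin_ffact h k) natrM (_ : -4 = -1 * 4 :> F); last by ring.
rewrite exprMn; ring.
Qed.

Lemma b_top {F : fieldType} p h : p \in [pchar F] -> (h.*2.+1 = p)%N ->
  (seq_b (p - 1))%:R = (-3) ^+ h :> F.
Proof.
move=> pF hp; have pp := pcharf_prime pF; have p1 := prime_gt1 pp.
rewrite /seq_b natr_sum.
have -> : (p - 1).+1 = p by lia.
transitivity (\sum_(0 <= k < p) (-4) ^+ k * ('C(h, k))%:R : F).
  rewrite big_nat_cond [RHS]big_nat_cond; apply: eq_bigr => k /andP[/andP[_ kp] _].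
  rewrite natrM natrX (cent_binom pF hp kp).
  have e1 := @binom_refl F p 0 k pF (prime_gt0 pp) kp.
  rewrite subn0 add0n binn mulr1 in e1.
  by rewrite e1 sqrr_sign mul1r.
rewrite -(@sum_ext _ (fun k => (-4) ^+ k * ('C(h, k))%:R : F) h p); last 2 first.
- by lia.
- by move=> k hk; rewrite bin_small // mulr0.
rewrite big_mkord (_ : -3 = -4 + 1 :> F); last by ring.
rewrite exprD1n; apply: eq_bigr => i _; by rewrite mulr_natr.
Qed.

Lemma fermat_F p (x : 'F_p) : prime p -> x != 0 -> x ^+ (p - 1) = 1.
Proof.
move=> pp x0; apply: (mulIf x0); rewrite mul1r -exprSr.
rewrite (_ : (p - 1).+1 = p); last by have := prime_gt1 pp; lia.
by rewrite -[RHS](expf_card x) card_Fp.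
Qed.

Lemma natr_inj_F {F : fieldType} p i j : p \in [pchar F] -> (i < p)%N -> (j < p)%N ->
  i%:R = j%:R :> F -> i = j.
Proof.
move=> pF ip jp.
wlog le : i j ip jp / (i <= j)%N.
  move=> W E; have [l|l] := leqP i j; first exact: W.
  by apply/esym/W => //; [exact: ltnW].
move=> E; apply/eqP; rewrite eqn_leq le /=.
have : ((j - i)%:R == 0 :> F) by rewrite natrB // E subrr.
rewrite -(dvdn_pcharf pF); case: (posnP (j - i)) => [z _| pos /dvdn_leq]; first by lia.
by move=> /(_ pos); lia.
Qed.

Lemma intr_sqr_F p (x : nat) : ((x%:Z) ^+ 2)%:~R = (x%:R) ^+ 2 :> 'F_p.
Proof. by rewrite rmorphXn /= -pmulrn. Qed.

Lemma euler p h a : prime p -> (h.*2.+1 = p)%N -> ~~ (p%:Z %| a)%Z ->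
  (legendre a p)%:~R = (a%:~R) ^+ h :> 'F_p.
Proof.
move=> pp hp nd.
have pF := pchar_Fp pp.
have p1 := prime_gt1 pp.
have h0 : (0 < h)%N by lia.
set A := a%:~R : 'F_p.
have a0 : A != 0 by rewrite /A -(dvdz_pcharf pF).
have hh : (h.*2 = p - 1)%N by lia.
rewrite /legendre (negbTE nd).
case: ifP => [/existsP [x /eqP]| nex].
  move/eqP; rewrite modp_F // intr_sqr_F -/A => /eqP E.
  have x0 : (x : nat)%:R != 0 :> 'F_p.
    by apply: contraNneq a0 => ex; rewrite -E ex expr0n.
  by rewrite -E -exprM mul2n hh fermat_F.
have sq : (A ^+ h) ^+ 2 = 1 by rewrite -exprM muln2 hh fermat_F.
have : (A ^+ h - 1) * (A ^+ h + 1) == 0 by rewrite -subr_sqr sq expr1n subrr.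
rewrite mulf_eq0 => /orP [|]; last first.
  by rewrite addr_eq0 => /eqP ->.
rewrite subr_eq0 => /eqP Ah.
exfalso; move/negbT: nex => /negP; apply.
pose rs := [seq (i%:R : 'F_p) ^+ 2 | i <- iota 1 h].
have allrs : all h.-unity_root rs.
  apply/allP => y /mapP [i]; rewrite mem_iota => /andP [i1 ih] ->.
  apply/unity_rootP; rewrite -exprM mul2n hh fermat_F //.
  by apply: (natr_nz pF); lia.
have urs : uniq rs.
  rewrite map_inj_in_uniq ?iota_uniq // => i j; rewrite !mem_iota => /andP[i1 ih] /andP[j1 jh] E.
  have : ((i%:R - j%:R) * (i%:R + j%:R) == 0 :> 'F_p) by rewrite -subr_sqr E subrr.
  rewrite mulf_eq0 => /orP [|].
    by rewrite subr_eq0 => /eqP; apply: (natr_inj_F pF); lia.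
  by rewrite -natrD (negbTE (natr_nz pF _)) //; lia.
have szrs : size rs = h by rewrite size_map size_iota.
have : A \in rs.
  rewrite -(mem_unity_roots h0 allrs urs szrs A); exact/unity_rootP.
move=> /mapP [i]; rewrite mem_iota => /andP [i1 ih] Ei.
have ip : (i < p)%N by lia.
apply/existsP; exists (Ordinal ip); rewrite /=.
by rewrite modp_F // intr_sqr_F -/A Ei.
Qed.

Lemma part2 (p n : nat) : prime p -> (3 < p)%N -> (n <= p - 1)%N ->
     ((seq_b n)%:Z == legendre (-3) p * 9 ^+ n * (seq_b (p - 1 - n))%:Z
        %[mod p%:Z])%Z.
Proof.
move=> pp p3 np.
have pF := pchar_Fp pp.
have podd : odd p by case/even_prime: pp => // E; lia.
set h := p./2.
have hp : h.*2.+1 = p by have := odd_double_half p; rewrite podd /h; lia.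
have nd : ~~ (p%:Z %| -3)%Z.
  apply/negP => /dvdn_leq; lia.
rewrite modp_F // !rmorphM /= (euler pp hp nd).
rewrite rmorphXn /= -!pmulrn.
have -> : ((-3)%Z%:~R : 'F_p) = -3 by [].
have := @reflect_rec _ p (fun n => (seq_b n)%:R) 10 (-9) pF (@b_rec_F _) _ n np.
rewrite (b_top pF hp) opprK /= => H.
have sq : ((-3) ^+ h) ^+ 2 = 1 :> 'F_p.
  rewrite -exprM muln2 (_ : h.*2 = p - 1)%N; last by lia.
  rewrite fermat_F // oppr_eq0 (natr_nz pF) //; lia.
apply/eqP; rewrite -mulrA.
rewrite -[X in _ = _ * X]/(9 ^+ n * (seq_b (p - 1 - n))%:R : 'F_p).
rewrite H; last by have [-> _] := b01.
by rewrite mulrA -expr2 sq mul1r.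
Qed.

Theorem mainTheorem7 :
  (forall (p n : nat), prime p -> (n <= p - 1)%N ->
     ((apery_a n)%:Z == (-1) ^+ n * (apery_a (p - 1 - n))%:Z %[mod p%:Z])%Z)
  /\
  (forall (p n : nat), prime p -> (3 < p)%N -> (n <= p - 1)%N ->
     ((seq_b n)%:Z == legendre (-3) p * 9 ^+ n * (seq_b (p - 1 - n))%:Z
        %[mod p%:Z])%Z).
Proof.
split; [exact: part1 | exact: part2].
Qed.
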